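(* Let $A\in \mathbb{Z}^{m\times n}$, $b\in \mathbb{Z}^m$, and suppose $P:=\{x:Ax\leq b\}$ is nonempty. For a nonempty face $F$ of $P$, let $A_Fx\le b_F$ be the subsystem of $Ax\le b$ consisting of the inequalities satisfied with equality by all points of $F$. Then the following are equivalent for a prime $p$: (1) $P$ is a $p$-adic polyhedron; (2) for every nonempty face $F$ of $P$, the affine hull of $F$ contains a $p$-adic point; (3) for every nonempty face $F$ of $P$ and every real vector $z$, if $A_F^\top z$ is integral then $b_F^\top z$ is $p$-adic; (4) for all $w\in\mathbb{R}^n$ for which $\max\{w^\top x:x\in P\}$ has an optimum, it has a $p$-adic optimal solution; (5) for all $w\in\mathbb{Z}^n$ for which $\max\{w^\top x:x\in P\}$ has an optimum, its optimal value is $p$-adic.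
   Context: A $p$-adic rational is a number $a/p^k$ with $a,k\in\mathbb{Z}$, $k\ge0$; a vector is $p$-adic if all entries are $p$-adic rationals. A nonempty rational polyhedron is $p$-adic if every nonempty face of it contains a $p$-adic point. *)

(* Defs.v *)
From HB Require Import structures.
From mathcomp Require Import all_boot all_order all_algebra.
From mathcomp Require Import reals.
Set Implicit Arguments. Unset Strict Implicit. Unset Printing Implicit Defensive.
Import Order.TTheory GRing.Theory Num.Theory.
Local Open Scope ring_scope.

Section Defs.
Variable R : realType.

Definition padic (p : nat) (x : R) : Prop :=
  exists (a : int) (k : nat), x = a%:~R / (p%:R ^+ k).

Definition padic_vec (p n : nat) (x : 'cV[R]_n) : Prop :=
  forall i, padic p (x i 0).

Definition is_integral (x : R) : Prop := exists k : int, x = k%:~R.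

Definition polyh (m n : nat) (A : 'M[int]_(m, n)) (b : 'cV[int]_m)
  (x : 'cV[R]_n) : Prop :=
  forall i, (map_mx intr A *m x) i 0 <= (b i 0)%:~R.

Definition dotv (n : nat) (w x : 'cV[R]_n) : R := \sum_(j < n) w j 0 * x j 0.

(* F is a face of P: F = P ∩ {x : c^T x = d} for some inequality c^T x <= d
   valid on P (c = 0, d = 0 gives P itself). *)
Definition is_face (n : nat) (P F : 'cV[R]_n -> Prop) : Prop :=
  exists (c : 'cV[R]_n) (d : R),
    (forall x, P x -> dotv c x <= d) /\
    (forall x, F x <-> (P x /\ dotv c x = d)).

Definition aff_hull (n : nat) (F : 'cV[R]_n -> Prop) (y : 'cV[R]_n) : Prop :=
  exists (k : nat) (xs : 'I_k -> 'cV[R]_n) (l : 'I_k -> R),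
    (forall i, F (xs i)) /\ \sum_(i < k) l i = 1 /\
    y = \sum_(i < k) l i *: xs i.

(* index i belongs to the implicit-equality subsystem A_F x <= b_F of F *)
Definition tight_row (m n : nat) (A : 'M[int]_(m, n)) (b : 'cV[int]_m)
  (F : 'cV[R]_n -> Prop) (i : 'I_m) : Prop :=
  forall x, F x -> (map_mx intr A *m x) i 0 = (b i 0)%:~R.

Definition optimal (n : nat) (P : 'cV[R]_n -> Prop) (w x0 : 'cV[R]_n) : Prop :=
  P x0 /\ forall x, P x -> dotv w x <= dotv w x0.

End Defs.

(* Main.v *)
Require Import Defs.
From HB Require Import structures.
From mathcomp Require Import all_boot all_order all_algebra.
From mathcomp Require Import reals.
From mathcomp Require Import ring lra zify.
From Stdlib Require Import Classical.
Set Implicit Arguments. Unset Strict Implicit. Unset Printing Implicit Defensive.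
Import Order.TTheory GRing.Theory Num.Theory.
Local Open Scope ring_scope.

Lemma padic_int (R : realType) p (a : int) : padic p (a%:~R : R).
Proof. by exists a, 0%N; rewrite expr0 divr1. Qed.

Lemma padic0 (R : realType) p : padic p (0 : R).
Proof. by have := padic_int R p 0; rewrite mulr0z. Qed.

Lemma pnz (R : realType) p k : (0 < p)%N -> (p%:R ^+ k : R) != 0.
Proof. by move=> hp; rewrite expf_neq0 // pnatr_eq0 -lt0n. Qed.

Lemma intr_pow (R : realType) p k : (((p ^ k)%N)%:Z)%:~R = (p%:R ^+ k : R).
Proof. by rewrite -natrX pmulrn. Qed.

Lemma padicD (R : realType) p (x y : R) : (0 < p)%N -> padic p x -> padic p y -> padic p (x + y).
Proof.
move=> hp [a [k ->]] [b [l ->]].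
exists (a * (p ^ l)%N%:Z + b * (p ^ k)%N%:Z), (k + l)%N.
rewrite rmorphD !rmorphM /= !intr_pow exprD.
have := pnz R k hp; have := pnz R l hp => h1 h2.
by field; rewrite h1 h2.
Qed.

Lemma padicM (R : realType) p (x y : R) : (0 < p)%N -> padic p x -> padic p y -> padic p (x * y).
Proof.
move=> hp [a [k ->]] [b [l ->]].
exists (a * b), (k + l)%N.
rewrite !rmorphM /= exprD.
have := pnz R k hp; have := pnz R l hp => h1 h2.
by field; rewrite h1 h2.
Qed.

Lemma padicN (R : realType) p (x : R) : padic p x -> padic p (- x).
Proof. by move=> [a [k ->]]; exists (- a), k; rewrite rmorphN mulNr. Qed.

Lemma padicB (R : realType) p (x y : R) : (0 < p)%N -> padic p x -> padic p y -> padic p (x - y).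
Proof. by move=> hp hx hy; apply: padicD => //; apply: padicN. Qed.

Lemma padic_sum (R : realType) p (I : finType) (P : pred I) (F : I -> R) :
  (0 < p)%N -> (forall i, P i -> padic p (F i)) -> padic p (\sum_(i | P i) F i).
Proof.
move=> hp h; apply: (big_ind (padic p)) => //; first exact: padic0.
by move=> x y; apply: padicD.
Qed.

Lemma integral_padic (R : realType) p (x : R) : is_integral x -> padic p x.
Proof. by move=> [k ->]; apply: padic_int. Qed.

Lemma is_integral_floor (R : realType) (x : R) : is_integral x -> (Num.floor x)%:~R = x.
Proof. by move=> [k ->]; rewrite intrKfloor. Qed.

Lemma dot_tr (R : realType) m n (M : 'M[R]_(m, n)) (z : 'cV[R]_m) (y : 'cV[R]_n) :
  dotv (M^T *m z) y = \sum_i z i 0 * (M *m y) i 0.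
Proof.
rewrite /dotv.
under eq_bigr => j _ do rewrite !mxE big_distrl /=.
rewrite exchange_big /=; apply: eq_bigr => i _.
rewrite !mxE big_distrr /=; apply: eq_bigr => j _; rewrite !mxE.
by rewrite mulrCA mulrA.
Qed.

Lemma padic_dotv (R : realType) p n (w y : 'cV[R]_n) : (0 < p)%N ->
  (forall j, is_integral (w j 0)) -> padic_vec p y -> padic p (dotv w y).
Proof.
move=> hp hw hy; apply: padic_sum => // j _; apply: padicM => //.
exact: integral_padic.
Qed.

Lemma map_inv_l (R : realType) m (L : 'M[int]_m) : L \in unitmx ->
  map_mx (intr : int -> R) (invmx L) *m map_mx intr L = 1%:M.
Proof. by move=> uL; rewrite -map_mxM mulVmx // map_mx1. Qed.

Lemma map_inv_r (R : realType) m (L : 'M[int]_m) : L \in unitmx ->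
  map_mx (intr : int -> R) L *m map_mx intr (invmx L) = 1%:M.
Proof. by move=> uL; rewrite -map_mxM mulmxV // map_mx1. Qed.

Lemma snf_padic (R : realType) p m n (A : 'M[int]_(m,n)) (b : 'cV[int]_m) (x0 : 'cV[R]_n):
 (0 < p)%N -> map_mx intr A *m x0 = map_mx intr b ->
 (forall z : 'cV[R]_m, (forall j, is_integral (((map_mx intr A)^T *m z) j 0)) ->
    padic p (\sum_i (b i 0)%:~R * z i 0)) ->
 exists y : 'cV[R]_n, map_mx intr A *m y = map_mx intr b /\ padic_vec p y.
Proof.
move=> hp hx0 hz.
case: (int_Smith_normal_form A) => L uL [Q uQ [d _ hA]].
set D := \matrix_(i, j) _ in hA.
pose mp m' n' (M : 'M[int]_(m', n')) := map_mx (intr : int -> R) M.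
have hAR : mp _ _ A = mp _ _ L *m mp _ _ D *m mp _ _ Q by rewrite /mp hA !map_mxM.
pose u0 := mp _ _ Q *m x0.
have hDu0 : mp _ _ D *m u0 = mp _ _ (invmx L) *m mp _ _ b.
  rewrite /mp -hx0 -/(mp _ _ A) hAR /u0 !mulmxA map_inv_l // mul1mx.
  by rewrite -!mulmxA.
have u0E : u0 = mp _ _ Q *m x0 by [].
clearbody u0.
pose u : 'cV[R]_n := \col_j (if ((j < m)%N && (d`_j != 0)) then u0 j 0 else 0).
have hDu : mp _ _ D *m u = mp _ _ D *m u0.
  apply/matrixP => i k; rewrite /mp !mxE; apply: eq_bigr => j _.
  rewrite !mxE.
  case: (eqVneq (i : nat) j) => [hij | hij]; last by rewrite mulr0n !mul0r.
  rewrite -hij ltn_ord /=.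
  case: (eqVneq d`_i 0) => [-> | hd]; first by rewrite !mul0rn !mul0r.
  by rewrite /= (ord1 k).
have hu0 : forall j : 'I_n, (j < m)%N -> d`_j != 0 -> padic p (u0 j 0).
  move=> j hjm hdj; pose j' := Ordinal hjm.
  pose dj : R := (d`_j)%:~R.
  have hdj0 : dj != 0 by rewrite /dj intr_eq0.
  pose z : 'cV[R]_m := dj^-1 *: ((mp _ _ (invmx L))^T *m delta_mx j' 0).
  have := hz z.
  have -> : \sum_i (b i 0)%:~R * z i 0 = u0 j 0.
    rewrite /z -colE.
    have -> : u0 j 0 = dj^-1 * (mp _ _ D *m u0) j' 0.
      rewrite !mxE (bigD1 j) //= big1 ?addr0; last first.
        move=> k hk; rewrite !mxE /=.
        have -> : (j == k :> nat) = false by apply/negbTE; rewrite eq_sym; exact: hk.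
        by rewrite mulr0n mul0r.
      rewrite /mp /= [in X in _ * (X * _)]mxE /D mxE /= eqxx mulr1n -/dj mulrA mulVf ?mul1r //.
    have := hDu0; move/matrixP/(_ j' 0) => ->.
    rewrite /mp /= !mxE big_distrr /=; apply: eq_bigr => i _.
    by rewrite !mxE; ring.
  apply; move=> l.
  exists (Q j l).
  have hDd : (mp _ _ D)^T *m (dj^-1 *: delta_mx j' 0) = delta_mx j 0 :> 'cV[R]_n.
    apply/matrixP => k c; rewrite !mxE (bigD1 j') //= big1 ?addr0; last first.
      by move=> i hi; rewrite !mxE (negbTE hi) /= mulr0 mulr0.
    rewrite !mxE /= (ord1 c) !eqxx andbT mulr1.
    case: (eqVneq k j) => [-> | hk].
      by rewrite eqxx mulr1n -/dj mulfV.
    have -> : (j == k :> nat) = false by apply/negbTE; rewrite eq_sym; exact: hk.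
    by rewrite mulr0n mul0r.
  have -> : ((mp _ _ A)^T *m z) = (mp _ _ Q)^T *m delta_mx j 0.
    rewrite hAR /z !trmx_mul -hDd -!mulmxA; congr (_ *m _); congr (_ *m _).
    rewrite -scalemxAr mulmxA -trmx_mul map_inv_l // trmx1 mul1mx //.
  by rewrite -colE !mxE.
exists (mp _ _ (invmx Q) *m u); split.
  rewrite -/(mp _ _ A) hAR -!mulmxA (mulmxA (mp _ _ Q)) map_inv_r // mul1mx.
  by rewrite hDu hDu0 mulmxA map_inv_r // mul1mx.
move=> k; rewrite !mxE; apply: padic_sum => // j _.
apply: padicM => //; first by rewrite /mp mxE; apply: padic_int.
rewrite mxE; case: ifP => [/andP [h1 h2] | _]; last exact: padic0.
exact: hu0.
Qed.

Definition tset (R : realType) m n (A : 'M[int]_(m,n)) (b : 'cV[int]_m) (x : 'cV[R]_n)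
  : {set 'I_m} := [set i | (map_mx intr A *m x) i 0 == (b i 0)%:~R].

Lemma Ax_lin (R : realType) m n (A : 'M[int]_(m,n)) (x v : 'cV[R]_n) t i :
  (map_mx intr A *m (x + t *: v)) i 0 = (map_mx intr A *m x) i 0 + t * (map_mx intr A *m v) i 0.
Proof. by rewrite mulmxDr -scalemxAr !mxE. Qed.

Lemma ray (R : realType) m n (A : 'M[int]_(m,n)) (b : 'cV[int]_m) (x v : 'cV[R]_n) :
 polyh A b x -> (forall i, i \in tset A b x -> (map_mx intr A *m v) i 0 = 0) ->
 (exists i, 0 < (map_mx intr A *m v) i 0) ->
 exists t : R, 0 < t /\ polyh A b (x + t *: v) /\
   (#|tset A b x| < #|tset A b (x + t *: v)|)%N.
Proof.
move=> hx hv [i0 hi0].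
pose S := [pred i | 0 < (map_mx intr A *m v) i 0].
pose f i := ((b i 0)%:~R - (map_mx intr A *m x) i 0) / (map_mx intr A *m v) i 0.
have [j hj hmin] := @arg_minP _ _ _ i0 S f hi0.
have hjx : (map_mx intr A *m x) j 0 < (b j 0)%:~R.
  rewrite lt_neqAle hx andbT; apply/negP => /eqP he.
  have : j \in tset A b x by rewrite inE he.
  by move/hv => h; move: hj; rewrite /S inE /= h ltxx.
have hj' : 0 < (map_mx intr A *m v) j 0 by exact: hj.
exists (f j); split; first by rewrite /f divr_gt0 // subr_gt0.
split.
  move=> i; rewrite Ax_lin.
  case: (ltP 0 ((map_mx intr A *m v) i 0)) => hi.
    have := hmin i hi; rewrite /f => hle.
    have := ler_wpM2r (ltW hi) hle; rewrite divfK ?gt_eqF //.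
    move=> h2; have := hx i; lra.
  have : f j * (map_mx intr A *m v) i 0 <= 0.
    by apply: mulr_ge0_le0 => //; rewrite /f divr_ge0 // ?subr_ge0 ?hx ?ltW.
  have := hx i; lra.
apply: proper_card; apply/properP; split.
  apply/subsetP => i hi; rewrite inE Ax_lin (hv i hi) mulr0 addr0.
  by move: hi; rewrite inE.
exists j.
  rewrite inE Ax_lin /f divfK ?(lt0r_neq0 hj') //; apply/eqP; ring.
by rewrite inE lt_eqF.
Qed.

Lemma dotv_lin (R : realType) n (c x v : 'cV[R]_n) t :
  dotv c (x + t *: v) = dotv c x + t * dotv c v.
Proof.
rewrite /dotv big_distrr -big_split /=; apply: eq_bigr => i _.
by rewrite !mxE; ring.
Qed.

Lemma Ax_sub (R : realType) m n (A : 'M[int]_(m,n)) (y x : 'cV[R]_n) i :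
  (map_mx intr A *m (y - x)) i 0 = (map_mx intr A *m y) i 0 - (map_mx intr A *m x) i 0.
Proof. by have := Ax_lin A y x (-1) i; rewrite scaleN1r mulN1r. Qed.

Lemma dotv0 (R : realType) n (c : 'cV[R]_n) : dotv c 0 = 0.
Proof. by rewrite /dotv big1 // => i _; rewrite mxE mulr0. Qed.

Lemma step (R : realType) m n (A : 'M[int]_(m,n)) (b : 'cV[int]_m) (c : 'cV[R]_n) d
  (x y : 'cV[R]_n) :
  (forall z, polyh A b z -> dotv c z <= d) ->
  polyh A b x -> dotv c x = d ->
  (forall i, i \in tset A b x -> (map_mx intr A *m y) i 0 = (b i 0)%:~R) ->
  ~ (polyh A b y /\ dotv c y = d) ->
  exists z, (polyh A b z /\ dotv c z = d) /\ (#|tset A b x| < #|tset A b z|)%N.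
Proof.
move=> hval hxP hxd hyT hyF.
pose v := y - x.
have hv : forall i, i \in tset A b x -> (map_mx intr A *m v) i 0 = 0.
  move=> i hi; rewrite /v Ax_sub (hyT i hi).
  by move: hi; rewrite inE => /eqP ->; rewrite subrr.
have noinc : forall s, (forall i, i \in tset A b x -> (map_mx intr A *m s) i 0 = 0) ->
    ~ (0 < dotv c s).
  move=> s hs hcs.
  case: (classic (exists i, 0 < (map_mx intr A *m s) i 0)) => [hex | hnex].
    have [t [ht [hP _]]] := ray hxP hs hex.
    have := hval _ hP; rewrite dotv_lin hxd => h.
    have : 0 < t * dotv c s by rewrite mulr_gt0.
    lra.
  have hP : polyh A b (x + 1 *: s).
    move=> i; rewrite Ax_lin mul1r; have := hxP i.
    have : ~~ (0 < (map_mx intr A *m s) i 0) by apply/negP => hi; apply: hnex; exists i.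
    rewrite -leNgt; lra.
  have := hval _ hP; rewrite dotv_lin hxd mul1r; lra.
have hcv : dotv c v = 0.
  case: (ltgtP (dotv c v) 0) => // h.
    have : ~ (0 < dotv c (-1 *: v)).
      by apply: noinc => i hi; rewrite -scalemxAr mxE hv // mulr0.
    have := dotv_lin c 0 v (-1).
    rewrite add0r dotv0 add0r => ->; lra.
  by have := noinc v hv.
have hy : y = x + 1 *: v by rewrite scale1r /v addrC subrK.
have hyd : dotv c y = d by rewrite hy dotv_lin hcv mulr0 addr0.
have : ~ polyh A b y by move=> hP; apply: hyF.
move=> /not_all_ex_not [i hi].
have hvi : 0 < (map_mx intr A *m v) i 0.
  rewrite /v Ax_sub; have := hxP i; move/negP: hi; rewrite -ltNge => hi; lra.
have [t [ht [hP hcard]]] := ray hxP hv (ex_intro _ i hvi).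
exists (x + t *: v); split => //; split => //.
by rewrite dotv_lin hcv mulr0 addr0.
Qed.

Lemma key (R : realType) m n (A : 'M[int]_(m,n)) (b : 'cV[int]_m) (F : 'cV[R]_n -> Prop) :
  is_face (polyh A b) F -> (exists x, F x) ->
  exists (T : {set 'I_m}) (x : 'cV[R]_n), F x /\
    (forall i, i \in T -> (map_mx intr A *m x) i 0 = (b i 0)%:~R) /\
    (forall y, (forall i, i \in T -> (map_mx intr A *m y) i 0 = (b i 0)%:~R) -> F y).
Proof.
move=> [c [d [hval hF]]] [x0 hx0].
suff H : forall N x, F x -> (m - #|tset A b x| <= N)%N ->
  exists (T : {set 'I_m}) (x : 'cV[R]_n), F x /\
    (forall i, i \in T -> (map_mx intr A *m x) i 0 = (b i 0)%:~R) /\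
    (forall y, (forall i, i \in T -> (map_mx intr A *m y) i 0 = (b i 0)%:~R) -> F y).
  exact: (H _ x0 hx0 (leqnn _)).
have alt : forall x, F x ->
  (forall y, (forall i, i \in tset A b x -> (map_mx intr A *m y) i 0 = (b i 0)%:~R) -> F y) \/
  exists z, F z /\ (#|tset A b x| < #|tset A b z|)%N.
  move=> x hx.
  case: (classic (forall y, (forall i, i \in tset A b x ->
      (map_mx intr A *m y) i 0 = (b i 0)%:~R) -> F y)) => hall; first by left.
  right; have [y hy] := not_all_ex_not _ _ hall.
  have [hyT hyF] := imply_to_and _ _ hy.
  have [hxP hxd] := (hF x).1 hx.
  have [z [hz hcard]] := step hval hxP hxd hyT (fun h => hyF ((hF y).2 h)).
  by exists z; split => //; apply/hF.
have done_ : forall x, F x ->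
  (forall y, (forall i, i \in tset A b x -> (map_mx intr A *m y) i 0 = (b i 0)%:~R) -> F y) ->
  exists (T : {set 'I_m}) (x : 'cV[R]_n), F x /\
    (forall i, i \in T -> (map_mx intr A *m x) i 0 = (b i 0)%:~R) /\
    (forall y, (forall i, i \in T -> (map_mx intr A *m y) i 0 = (b i 0)%:~R) -> F y).
  move=> x hx hall; exists (tset A b x), x; split => //; split => //.
  by move=> i; rewrite inE => /eqP.
have card_le : forall z : 'cV[R]_n, (#|tset A b z| <= m)%N.
  by move=> z; rewrite -[m in (_ <= m)%N]card_ord max_card.
elim=> [|N IH] x hx hN.
  case: (alt x hx) => [hall | [z [hz hcard]]]; first exact: done_ hx hall.
  have := card_le z; lia.
case: (alt x hx) => [hall | [z [hz hcard]]]; first exact: done_ hx hall.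
apply: (IH z hz); have := card_le z; lia.
Qed.

Lemma face_L (R : realType) m n (A : 'M[int]_(m,n)) (b : 'cV[int]_m) (T : {set 'I_m}) :
  is_face (polyh A b)
    (fun y : 'cV[R]_n => polyh A b y /\ forall i, i \in T -> (map_mx intr A *m y) i 0 = (b i 0)%:~R).
Proof.
pose c : 'cV[R]_n := \col_j \sum_(i in T) (A i j)%:~R.
have hc : forall y, dotv c y = \sum_(i in T) (map_mx intr A *m y) i 0.
  move=> y; rewrite /dotv.
  under eq_bigr => j _ do rewrite mxE big_distrl /=.
  rewrite exchange_big /=; apply: eq_bigr => i _; rewrite mxE.
  by apply: eq_bigr => j _; rewrite mxE.
exists c, (\sum_(i in T) (b i 0)%:~R); split.
  by move=> x hx; rewrite hc; apply: ler_sum => i _; apply: hx.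
move=> y; split.
  move=> [hy hT]; split => //; rewrite hc; apply: eq_bigr => i hi; exact: hT.
move=> [hy]; rewrite hc => heq; split => // i hi.
have h0 : \sum_(i in T) ((b i 0)%:~R - (map_mx intr A *m y) i 0) = 0.
  by rewrite sumrB heq subrr.
have := (psumr_eq0P _ h0) i hi.
  move=> h; apply/eqP; rewrite eq_sym -subr_eq0; apply/eqP; apply: h.
by move=> j _; rewrite subr_ge0; apply: hy.
Qed.

Lemma padic_L (R : realType) p m n (A : 'M[int]_(m,n)) (b : 'cV[int]_m) (T : {set 'I_m})
  (x0 : 'cV[R]_n) : (0 < p)%N ->
  (forall i, i \in T -> (map_mx intr A *m x0) i 0 = (b i 0)%:~R) ->
  (forall z : 'cV[R]_m, (forall i, i \notin T -> z i 0 = 0) ->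
     (forall j, is_integral (((map_mx intr A)^T *m z) j 0)) ->
     padic p (\sum_i (b i 0)%:~R * z i 0)) ->
  exists y : 'cV[R]_n, padic_vec p y /\
     forall i, i \in T -> (map_mx intr A *m y) i 0 = (b i 0)%:~R.
Proof.
move=> hp hx0 hz.
pose A' : 'M[int]_(m,n) := \matrix_(i,j) if i \in T then A i j else 0.
pose b' : 'cV[int]_m := \matrix_(i,j) if i \in T then b i j else 0.
have hA' : forall (y : 'cV[R]_n) i, (map_mx intr A' *m y) i 0 =
    if i \in T then (map_mx intr A *m y) i 0 else 0.
  move=> y i; rewrite !mxE; case: ifP => hi.
    by apply: eq_bigr => j _; rewrite !mxE hi.
  by apply: big1 => j _; rewrite !mxE hi mul0r.
have [y [hy hpy]] : exists y : 'cV[R]_n, map_mx intr A' *m y = map_mx intr b' /\ padic_vec p y.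
  apply: (snf_padic hp (x0 := x0)).
    apply/matrixP => i k; rewrite (ord1 k) hA' [in RHS]mxE [in RHS]mxE.
    by case: ifP => hi; [rewrite (hx0 i hi) | rewrite mulr0z].
  move=> z hint.
  pose z' : 'cV[R]_m := \col_i if i \in T then z i 0 else 0.
  have -> : \sum_i (b' i 0)%:~R * z i 0 = \sum_i (b i 0)%:~R * z' i 0.
    by apply: eq_bigr => i _; rewrite !mxE; case: ifP => _; rewrite ?mul0r ?mulr0.
  apply: hz; first by move=> i hi; rewrite mxE (negbTE hi).
  move=> j; have := hint j.
  have -> : ((map_mx intr A')^T *m z) j 0 = ((map_mx intr A)^T *m z') j 0 => //.
  rewrite !mxE; apply: eq_bigr => i _; rewrite !mxE.
  by case: ifP => _; rewrite ?mul0r ?mulr0.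
exists y; split => // i hi.
have := hA' y i; rewrite hi hy !mxE hi => <- //.
Qed.

Lemma dual_padic (R : realType) p m n (A : 'M[int]_(m,n)) (b : 'cV[int]_m)
  (y : 'cV[R]_n) (z : 'cV[R]_m) : (0 < p)%N ->
  (forall i, z i 0 != 0 -> (map_mx intr A *m y) i 0 = (b i 0)%:~R) ->
  padic_vec p y ->
  (forall j, is_integral (((map_mx intr A)^T *m z) j 0)) ->
  padic p (\sum_i (b i 0)%:~R * z i 0).
Proof.
move=> hp ht hy hint.
have -> : \sum_i (b i 0)%:~R * z i 0 = \sum_i z i 0 * (map_mx intr A *m y) i 0.
  apply: eq_bigr => i _; case: (eqVneq (z i 0) 0) => [-> | hz].
    by rewrite mulr0 mul0r.
  by rewrite (ht i hz) mulrC.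
by rewrite -dot_tr; apply: padic_dotv.
Qed.

Lemma face_P (R : realType) m n (A : 'M[int]_(m,n)) (b : 'cV[int]_m) F (x : 'cV[R]_n) :
  is_face (polyh A b) F -> F x -> polyh A b x.
Proof. by move=> [c [d [_ hF]]] /hF []. Qed.

Lemma i12 (R : realType) m n (A : 'M[int]_(m,n)) (b : 'cV[int]_m) p :
    (forall F : 'cV[R]_n -> Prop, is_face (polyh A b) F -> (exists x, F x) ->
       exists x, F x /\ padic_vec p x) ->
    (forall F : 'cV[R]_n -> Prop, is_face (polyh A b) F -> (exists x, F x) ->
       exists y, aff_hull F y /\ padic_vec p y).
Proof.
move=> H F hF hne; have [x [hx hpx]] := H F hF hne.
exists x; split => //; exists 1%N, (fun _ => x), (fun _ => 1).
by rewrite !big_ord1 scale1r.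
Qed.

Lemma i23 (R : realType) m n (A : 'M[int]_(m,n)) (b : 'cV[int]_m) p : (0 < p)%N ->
    (forall F : 'cV[R]_n -> Prop, is_face (polyh A b) F -> (exists x, F x) ->
       exists y, aff_hull F y /\ padic_vec p y) ->
    (forall F : 'cV[R]_n -> Prop, is_face (polyh A b) F -> (exists x, F x) ->
       forall z : 'cV[R]_m,
         (forall i, ~ tight_row A b F i -> z i 0 = 0) ->
         (forall j, is_integral (((map_mx intr A)^T *m z) j 0)) ->
         padic p (\sum_(i < m) (b i 0)%:~R * z i 0)).
Proof.
move=> hp H F hF hne z hsupp hint.
have [y [[k [xs [l [hxs [hl hy]]]]] hpy]] := H F hF hne.
apply: (dual_padic hp _ hpy hint) => i hzi.
have ht : tight_row A b F i.
  by apply: NNPP => hn; move: hzi; rewrite (hsupp i hn) eqxx.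
rewrite hy mulmx_sumr summxE.
under eq_bigr => j _ do rewrite -scalemxAr mxE (ht _ (hxs j)).
by rewrite -mulr_suml hl mul1r.
Qed.

Lemma i31 (R : realType) m n (A : 'M[int]_(m,n)) (b : 'cV[int]_m) p : (0 < p)%N ->
    (forall F : 'cV[R]_n -> Prop, is_face (polyh A b) F -> (exists x, F x) ->
       forall z : 'cV[R]_m,
         (forall i, ~ tight_row A b F i -> z i 0 = 0) ->
         (forall j, is_integral (((map_mx intr A)^T *m z) j 0)) ->
         padic p (\sum_(i < m) (b i 0)%:~R * z i 0)) ->
    (forall F : 'cV[R]_n -> Prop, is_face (polyh A b) F -> (exists x, F x) ->
       exists x, F x /\ padic_vec p x).
Proof.
move=> hp H F hF hne.
have [T [x [hx [hxT hL]]]] := key hF hne.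
have hxP := face_P hF hx.
have [y [hpy hyT]] : exists y : 'cV[R]_n, padic_vec p y /\
     forall i, i \in T -> (map_mx intr A *m y) i 0 = (b i 0)%:~R.
  apply: (padic_L hp hxT) => z hzT hint.
  apply: (H _ (@face_L R _ _ A b T)); last exact: hint.
    by exists x; split.
  move=> i hn; apply: hzT; apply/negP => hi; apply: hn => y' hy'.
  exact: (proj2 hy') i hi.
by exists y; split => //; apply: hL.
Qed.

Lemma i14 (R : realType) m n (A : 'M[int]_(m,n)) (b : 'cV[int]_m) p :
    (forall F : 'cV[R]_n -> Prop, is_face (polyh A b) F -> (exists x, F x) ->
       exists x, F x /\ padic_vec p x) ->
    (forall w : 'cV[R]_n, (exists x0, optimal (polyh A b) w x0) ->
       exists x0, optimal (polyh A b) w x0 /\ padic_vec p x0).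
Proof.
move=> H w [x0 [hx0 hopt]].
pose F := fun x => polyh A b x /\ dotv w x = dotv w x0.
have hF : is_face (polyh A b) F by exists w, (dotv w x0); split.
have [x [[hxP hxw] hpx]] := H F hF (ex_intro _ x0 (conj hx0 erefl)).
exists x; split => //; split => // y hy; rewrite hxw; exact: hopt.
Qed.

Lemma i45 (R : realType) m n (A : 'M[int]_(m,n)) (b : 'cV[int]_m) p : (0 < p)%N ->
    (forall w : 'cV[R]_n, (exists x0, optimal (polyh A b) w x0) ->
       exists x0, optimal (polyh A b) w x0 /\ padic_vec p x0) ->
    (forall w : 'cV[int]_n,
       (exists x0, optimal (polyh A b) (map_mx intr w : 'cV[R]_n) x0) ->
       forall x0, optimal (polyh A b) (map_mx intr w : 'cV[R]_n) x0 ->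
         padic p (dotv (map_mx intr w : 'cV[R]_n) x0)).
Proof.
move=> hp H w hex x0 hx0.
have [x1 [[hx1 hopt1] hp1]] := H _ hex.
have -> : dotv (map_mx intr w) x0 = dotv (map_mx intr w) x1.
  apply/eqP; rewrite eq_le; apply/andP; split; [exact: hopt1 _ (proj1 hx0) | exact: (proj2 hx0) _ hx1].
apply: padic_dotv => // j; rewrite mxE; by exists (w j 0).
Qed.

Lemma integralD (R : realType) (x y : R) : is_integral x -> is_integral y -> is_integral (x + y).
Proof. by move=> [a ->] [c ->]; exists (a + c); rewrite rmorphD. Qed.

Lemma i51 (R : realType) m n (A : 'M[int]_(m,n)) (b : 'cV[int]_m) p : (0 < p)%N ->
    (forall w : 'cV[int]_n,
       (exists x0, optimal (polyh A b) (map_mx intr w : 'cV[R]_n) x0) ->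
       forall x0, optimal (polyh A b) (map_mx intr w : 'cV[R]_n) x0 ->
         padic p (dotv (map_mx intr w : 'cV[R]_n) x0)) ->
    (forall F : 'cV[R]_n -> Prop, is_face (polyh A b) F -> (exists x, F x) ->
       exists x, F x /\ padic_vec p x).
Proof.
move=> hp H F hF hne.
have [T [x [hx [hxT hL]]]] := key hF hne.
have hxP := face_P hF hx.
have [y [hpy hyT]] : exists y : 'cV[R]_n, padic_vec p y /\
     forall i, i \in T -> (map_mx intr A *m y) i 0 = (b i 0)%:~R.
  apply: (padic_L hp hxT) => z hzT hint.
  pose k : 'cV[int]_m := \col_i (if i \in T then - Num.floor (z i 0) else 0).
  pose z' : 'cV[R]_m := z + map_mx intr k.
  have hz'0 : forall i, i \notin T -> z' i 0 = 0.
    by move=> i hi; rewrite !mxE (negbTE hi) (hzT i hi) add0r.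
  have hz'p : forall i, i \in T -> 0 <= z' i 0.
    move=> i hi; rewrite !mxE hi rmorphN /= subr_ge0.
    by apply: real_floor_le; apply: num_real.
  have hint' : forall j, is_integral (((map_mx intr A)^T *m z') j 0).
    move=> j; rewrite mulmxDr mxE; apply: integralD => //.
    have -> : (map_mx intr A)^T *m map_mx intr k = map_mx (intr : int -> R) (A^T *m k).
      by rewrite map_mxM map_trmx.
    by rewrite mxE; eexists.
  pose w : 'cV[int]_n := \col_j Num.floor (((map_mx intr A)^T *m z') j 0).
  have hw : map_mx intr w = (map_mx intr A)^T *m z' :> 'cV[R]_n.
    apply/matrixP => j c; rewrite (ord1 c) !mxE is_integral_floor //.
    by have := hint' j; rewrite mxE.
  have hdot : forall y : 'cV[R]_n, dotv (map_mx intr w) y =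
      \sum_i z' i 0 * (map_mx intr A *m y) i 0 by move=> y; rewrite hw dot_tr.
  have hval : dotv (map_mx intr w) x = \sum_i (b i 0)%:~R * z' i 0.
    rewrite hdot; apply: eq_bigr => i _; case: (boolP (i \in T)) => hi.
      by rewrite hxT // mulrC.
    by rewrite hz'0 // mulr0 mul0r.
  have hopt : optimal (polyh A b) (map_mx intr w) x.
    split => // y' hy'; rewrite hval hdot; apply: ler_sum => i _.
    case: (boolP (i \in T)) => hi.
      by rewrite mulrC; apply: ler_wpM2r; [apply: hz'p | apply: hy'].
    by rewrite hz'0 // mulr0 mul0r.
  have := H w (ex_intro _ x hopt) x hopt; rewrite hval => hpad.
  have -> : \sum_i (b i 0)%:~R * z i 0 =
      \sum_i (b i 0)%:~R * z' i 0 - \sum_i (b i 0)%:~R * (k i 0)%:~R.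
    rewrite -sumrB; apply: eq_bigr => i _; rewrite !mxE; ring.
  apply: padicB => //; apply: padic_sum => // i _.
  by rewrite -rmorphM; apply: padic_int.
by exists y; split => //; apply: hL.
Qed.
Unset Implicit Arguments.
Theorem theorem5p2 (R : realType) (m n : nat)
  (A : 'M[int]_(m, n)) (b : 'cV[int]_m) (p : nat) :
  prime p ->
  (exists x : 'cV[R]_n, polyh A b x) ->
  [<->
    (* (1) P is p-adic *)
    (forall F : 'cV[R]_n -> Prop, is_face (polyh A b) F -> (exists x, F x) ->
       exists x, F x /\ padic_vec p x);
    (* (2) affine hull of every nonempty face contains a p-adic point *)
    (forall F : 'cV[R]_n -> Prop, is_face (polyh A b) F -> (exists x, F x) ->
       exists y, aff_hull F y /\ padic_vec p y);
    (* (3) A_F^T z integral ==> b_F^T z p-adic (z supported on A_F rows) *)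
    (forall F : 'cV[R]_n -> Prop, is_face (polyh A b) F -> (exists x, F x) ->
       forall z : 'cV[R]_m,
         (forall i, ~ tight_row A b F i -> z i 0 = 0) ->
         (forall j, is_integral (((map_mx intr A)^T *m z) j 0)) ->
         padic p (\sum_(i < m) (b i 0)%:~R * z i 0));
    (* (4) every real objective with an optimum has a p-adic optimal solution *)
    (forall w : 'cV[R]_n, (exists x0, optimal (polyh A b) w x0) ->
       exists x0, optimal (polyh A b) w x0 /\ padic_vec p x0);
    (* (5) every integral objective with an optimum has p-adic optimal value *)
    (forall w : 'cV[int]_n,
       (exists x0, optimal (polyh A b) (map_mx intr w : 'cV[R]_n) x0) ->
       forall x0, optimal (polyh A b) (map_mx intr w : 'cV[R]_n) x0 ->
         padic p (dotv (map_mx intr w : 'cV[R]_n) x0))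
  ].

Proof.
move=> hpr _; have hp : (0 < p)%N by apply: prime_gt0.
tfae.
- exact: i12.
- exact: i23.
- by move=> H; apply: i14; apply: i31.
- exact: i45.
- exact: i51.
Qed.
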